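(* For every formula $\varphi$ of the modal language $\mathcal{L}_m$, $\varphi$ is derivable in $\mathsf{WK}$ if and only if $\varphi^\tau$ is derivable in $\mathsf{ConstCK}$.
   Context: Language $\mathcal{L}$: formulas $\varphi ::= p \mid \bot \mid \varphi\wedge\varphi \mid \varphi\vee\varphi \mid \varphi\to\varphi \mid \varphi \mathrel{\Box\!\!\to} \varphi \mid \varphi \mathrel{\Diamond\!\!\to}\varphi$; $\neg\varphi:=\varphi\to\bot$, $\top:=\neg\bot$, $\varphi\leftrightarrow\psi:=(\varphi\to\psi)\wedge(\psi\to\varphi)$. Modal language $\mathcal{L}_m$: formulas $\varphi ::= p\mid\bot\mid\varphi\wedge\varphi\mid\varphi\vee\varphi\mid\varphi\to\varphi\mid\Box\varphi\mid\Diamond\varphi$. $\mathsf{ConstCK}$: any axiomatisation of intuitionistic propositional logic in $\mathcal{L}$ with modus ponens, plus axioms CM$_\Box$: $(\varphi\mathrel{\Box\!\!\to}\psi\wedge\chi)\to(\varphi\mathrel{\Box\!\!\to}\psi)\wedge(\varphi\mathrel{\Box\!\!\to}\chi)$; CC$_\Box$: $(\varphi\mathrel{\Box\!\!\to}\psi)\wedge(\varphi\mathrel{\Box\!\!\to}\chi)\to(\varphi\mathrel{\Box\!\!\to}\psi\wedge\chi)$; CN$_\Box$: $\varphi\mathrel{\Box\!\!\to}\top$; CN$_\Diamond$: $\neg(\varphi\mathrel{\Diamond\!\!\to}\bot)$; CK$_\Diamond$: $(\varphi\mathrel{\Box\!\!\to}(\psi\to\chi))\to((\varphi\mathrel{\Diamond\!\!\to}\psi)\to(\varphi\mathrel{\Diamond\!\!\to}\chi))$;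 rules RA$_\Box$: from $\varphi\leftrightarrow\rho$ infer $(\varphi\mathrel{\Box\!\!\to}\psi)\leftrightarrow(\rho\mathrel{\Box\!\!\to}\psi)$; RC$_\Box$: from $\psi\leftrightarrow\chi$ infer $(\varphi\mathrel{\Box\!\!\to}\psi)\leftrightarrow(\varphi\mathrel{\Box\!\!\to}\chi)$; RA$_\Diamond$, RC$_\Diamond$: the same with $\mathrel{\Diamond\!\!\to}$. $\mathsf{WK}$ (propositional fragment of Wijesekera's logic): intuitionistic propositional logic in $\mathcal{L}_m$ with modus ponens, plus the rule from $\varphi$ infer $\Box\varphi$, and axioms $\Box(\varphi\to\psi)\to(\Box\varphi\to\Box\psi)$, $\Box(\varphi\to\psi)\to(\Diamond\varphi\to\Diamond\psi)$, $\neg\Diamond\bot$. Translation $(\cdot)^\tau:\mathcal{L}_m\to\mathcal{L}$: $p^\tau=p$, $\bot^\tau=\bot$, $(\rho\circ\psi)^\tau=\rho^\tau\circ\psi^\tau$ for $\circ\in\{\wedge,\vee,\to\}$, $(\Box\psi)^\tau=\top\mathrel{\Box\!\!\to}\psi^\tau$, $(\Diamond\psi)^\tau=\top\mathrel{\Diamond\!\!\to}\psi^\tau$. *)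

(* Defs.v *)
Inductive form : Type :=
| Var : nat -> form
| Bot : form
| And : form -> form -> form
| Or : form -> form -> form
| Imp : form -> form -> form
| CBox : form -> form -> form
| CDia : form -> form -> form.

Definition Neg (a : form) : form := Imp a Bot.
Definition Top : form := Neg Bot.
Definition Iff (a b : form) : form := And (Imp a b) (Imp b a).

Inductive ConstCK : form -> Prop :=
| CK_K : forall a b, ConstCK (Imp a (Imp b a))
| CK_S : forall a b c,
    ConstCK (Imp (Imp a (Imp b c)) (Imp (Imp a b) (Imp a c)))
| CK_AndE1 : forall a b, ConstCK (Imp (And a b) a)
| CK_AndE2 : forall a b, ConstCK (Imp (And a b) b)
| CK_AndI : forall a b, ConstCK (Imp a (Imp b (And a b)))
| CK_OrI1 : forall a b, ConstCK (Imp a (Or a b))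
| CK_OrI2 : forall a b, ConstCK (Imp b (Or a b))
| CK_OrE : forall a b c,
    ConstCK (Imp (Imp a c) (Imp (Imp b c) (Imp (Or a b) c)))
| CK_Efq : forall a, ConstCK (Imp Bot a)
| CK_CMBox : forall a b c,
    ConstCK (Imp (CBox a (And b c)) (And (CBox a b) (CBox a c)))
| CK_CCBox : forall a b c,
    ConstCK (Imp (And (CBox a b) (CBox a c)) (CBox a (And b c)))
| CK_CNBox : forall a, ConstCK (CBox a Top)
| CK_CNDia : forall a, ConstCK (Neg (CDia a Bot))
| CK_CKDia : forall a b c,
    ConstCK (Imp (CBox a (Imp b c)) (Imp (CDia a b) (CDia a c)))
| CK_MP : forall a b, ConstCK (Imp a b) -> ConstCK a -> ConstCK b
| CK_RABox : forall a r b, ConstCK (Iff a r) ->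
    ConstCK (Iff (CBox a b) (CBox r b))
| CK_RCBox : forall a b c, ConstCK (Iff b c) ->
    ConstCK (Iff (CBox a b) (CBox a c))
| CK_RADia : forall a r b, ConstCK (Iff a r) ->
    ConstCK (Iff (CDia a b) (CDia r b))
| CK_RCDia : forall a b c, ConstCK (Iff b c) ->
    ConstCK (Iff (CDia a b) (CDia a c)).

Inductive mform : Type :=
| MVar : nat -> mform
| MBot : mform
| MAnd : mform -> mform -> mform
| MOr : mform -> mform -> mform
| MImp : mform -> mform -> mform
| MBox : mform -> mform
| MDia : mform -> mform.

Definition MNeg (a : mform) : mform := MImp a MBot.

Inductive WK : mform -> Prop :=
| WK_K : forall a b, WK (MImp a (MImp b a))
| WK_S : forall a b c,
    WK (MImp (MImp a (MImp b c)) (MImp (MImp a b) (MImp a c)))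
| WK_AndE1 : forall a b, WK (MImp (MAnd a b) a)
| WK_AndE2 : forall a b, WK (MImp (MAnd a b) b)
| WK_AndI : forall a b, WK (MImp a (MImp b (MAnd a b)))
| WK_OrI1 : forall a b, WK (MImp a (MOr a b))
| WK_OrI2 : forall a b, WK (MImp b (MOr a b))
| WK_OrE : forall a b c,
    WK (MImp (MImp a c) (MImp (MImp b c) (MImp (MOr a b) c)))
| WK_Efq : forall a, WK (MImp MBot a)
| WK_KBox : forall a b,
    WK (MImp (MBox (MImp a b)) (MImp (MBox a) (MBox b)))
| WK_KDia : forall a b,
    WK (MImp (MBox (MImp a b)) (MImp (MDia a) (MDia b)))
| WK_NDia : WK (MNeg (MDia MBot))
| WK_MP : forall a b, WK (MImp a b) -> WK a -> WK b
| WK_Nec : forall a, WK a -> WK (MBox a).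

Fixpoint tau (p : mform) : form :=
  match p with
  | MVar n => Var n
  | MBot => Bot
  | MAnd a b => And (tau a) (tau b)
  | MOr a b => Or (tau a) (tau b)
  | MImp a b => Imp (tau a) (tau b)
  | MBox a => CBox Top (tau a)
  | MDia a => CDia Top (tau a)
  end.

(* Main.v *)
Require Import Defs.

Lemma C_trans a b c : ConstCK (Imp a b) -> ConstCK (Imp b c) -> ConstCK (Imp a c).
Proof.
  intros H1 H2. eapply CK_MP; [eapply CK_MP; [apply CK_S|] | exact H1].
  eapply CK_MP; [apply CK_K | exact H2].
Qed.
Lemma C_id a : ConstCK (Imp a a).
Proof.
  eapply CK_MP; [eapply CK_MP; [apply (CK_S a (Imp a a) a)| apply CK_K]| apply (CK_K a a)].
Qed.
Lemma C_Sr a b c : ConstCK (Imp a (Imp b c)) -> ConstCK (Imp a b) -> ConstCK (Imp a c).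
Proof. intros H1 H2. eapply CK_MP; [eapply CK_MP; [apply CK_S| exact H1] | exact H2]. Qed.
Lemma C_pair a b c : ConstCK (Imp a b) -> ConstCK (Imp a c) -> ConstCK (Imp a (And b c)).
Proof. intros H1 H2. apply (C_Sr a c). eapply C_trans; [exact H1| apply CK_AndI]. exact H2. Qed.
Lemma C_lift a b c : ConstCK (Imp b c) -> ConstCK (Imp (Imp a b) (Imp a c)).
Proof. intros H. eapply CK_MP; [apply CK_S|]. eapply CK_MP; [apply CK_K| exact H]. Qed.
Lemma C_curry x y z : ConstCK (Imp (And x y) z) -> ConstCK (Imp x (Imp y z)).
Proof. intros H. eapply C_trans; [apply CK_AndI| apply C_lift; exact H]. Qed.
Lemma C_iffI a b : ConstCK (Imp a b) -> ConstCK (Imp b a) -> ConstCK (Iff a b).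
Proof. intros H1 H2. unfold Iff. eapply CK_MP; [eapply CK_MP; [apply CK_AndI| exact H1]| exact H2]. Qed.
Lemma C_iffE1 a b : ConstCK (Iff a b) -> ConstCK (Imp a b).
Proof. intros H. eapply CK_MP; [apply CK_AndE1| exact H]. Qed.
Lemma C_Top : ConstCK Top.
Proof. apply CK_Efq. Qed.

Lemma W_trans a b c : WK (MImp a b) -> WK (MImp b c) -> WK (MImp a c).
Proof.
  intros H1 H2. eapply WK_MP; [eapply WK_MP; [apply WK_S|] | exact H1].
  eapply WK_MP; [apply WK_K | exact H2].
Qed.
Lemma W_id a : WK (MImp a a).
Proof.
  eapply WK_MP; [eapply WK_MP; [apply (WK_S a (MImp a a) a)| apply WK_K]| apply (WK_K a a)].
Qed.
Lemma W_Sr a b c : WK (MImp a (MImp b c)) -> WK (MImp a b) -> WK (MImp a c).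
Proof. intros H1 H2. eapply WK_MP; [eapply WK_MP; [apply WK_S| exact H1] | exact H2]. Qed.
Lemma W_pair a b c : WK (MImp a b) -> WK (MImp a c) -> WK (MImp a (MAnd b c)).
Proof. intros H1 H2. apply (W_Sr a c). eapply W_trans; [exact H1| apply WK_AndI]. exact H2. Qed.
Lemma W_uncurry x y z : WK (MImp x (MImp y z)) -> WK (MImp (MAnd x y) z).
Proof. intros H. apply (W_Sr _ y). eapply W_trans; [apply WK_AndE1| exact H]. apply WK_AndE2. Qed.
Lemma W_iffI a b : WK (MImp a b) -> WK (MImp b a) -> WK (MAnd (MImp a b) (MImp b a)).
Proof. intros H1 H2. eapply WK_MP; [eapply WK_MP; [apply WK_AndI| exact H1]| exact H2]. Qed.
Lemma W_boxmono a b : WK (MImp a b) -> WK (MImp (MBox a) (MBox b)).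
Proof. intros H. eapply WK_MP; [apply WK_KBox| apply WK_Nec; exact H]. Qed.
Lemma W_diamono a b : WK (MImp a b) -> WK (MImp (MDia a) (MDia b)).
Proof. intros H. eapply WK_MP; [apply WK_KDia| apply WK_Nec; exact H]. Qed.

Fixpoint sig (f : form) : mform :=
  match f with
  | Var n => MVar n
  | Bot => MBot
  | And a b => MAnd (sig a) (sig b)
  | Or a b => MOr (sig a) (sig b)
  | Imp a b => MImp (sig a) (sig b)
  | CBox _ b => MBox (sig b)
  | CDia _ b => MDia (sig b)
  end.

Lemma sig_tau p : sig (tau p) = p.
Proof. induction p; simpl; congruence. Qed.

Lemma back f : ConstCK f -> WK (sig f).
Proof.
  induction 1; simpl.
  all: try (constructor; fail).
  - apply W_pair; apply W_boxmono; [apply WK_AndE1| apply WK_AndE2].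
  - apply W_uncurry. eapply W_trans; [apply W_boxmono; apply WK_AndI| apply WK_KBox].
  - apply WK_Nec. apply WK_Efq.
  - eapply WK_MP; eassumption.
  - apply W_iffI; apply W_id.
  - simpl in IHConstCK.
    apply W_iffI; apply W_boxmono.
    + eapply WK_MP; [apply WK_AndE1| exact IHConstCK].
    + eapply WK_MP; [apply WK_AndE2| exact IHConstCK].
  - apply W_iffI; apply W_id.
  - simpl in IHConstCK.
    apply W_iffI; apply W_diamono.
    + eapply WK_MP; [apply WK_AndE1| exact IHConstCK].
    + eapply WK_MP; [apply WK_AndE2| exact IHConstCK].
Qed.

Lemma fwd p : WK p -> ConstCK (tau p).
Proof.
  induction 1; simpl.
  all: try (constructor; fail).
  - apply C_curry.
    set (P := And (Imp (tau a) (tau b)) (tau a)).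
    eapply C_trans; [apply CK_CCBox|].
    eapply C_trans; [apply C_iffE1; apply (CK_RCBox Top P (And P (tau b)))|].
    + apply C_iffI.
      * apply C_pair; [apply C_id|]. unfold P. apply (C_Sr _ (tau a)); [apply CK_AndE1| apply CK_AndE2].
      * apply CK_AndE1.
    + eapply C_trans; [apply CK_CMBox| apply CK_AndE2].
  - eapply CK_MP; eassumption.
  - eapply CK_MP; [apply C_iffE1; apply (CK_RCBox Top Top (tau a))| apply CK_CNBox].
    apply C_iffI.
    + eapply CK_MP; [apply CK_K| exact IHWK].
    + eapply CK_MP; [apply CK_K| exact C_Top].
Qed.

Theorem theorem8 : forall phi : mform, WK phi <-> ConstCK (tau phi).
Proof.
  intro phi. split; [apply fwd|]. intro H. rewrite <- (sig_tau phi). apply back; exact H.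
Qed.
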